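(* Let $G=(V,E)$ be a finite simple strongly connected directed graph. Then the polynomial $\det(L)$ divides $\det(\mathcal L)$.
   Context: $x_e$ ($e\in E$), $y_v$ ($v\in V$) are indeterminates; $Q_{vw}=x_e$ for an edge $e$ from $v\neq w$ to $w$ (else $0$), $Q_{vv}=-\sum_{s(e)=v}x_e$; $L=Q+\mathrm{diag}(y_v)$. A spanning tree of $G$ is a subgraph on all vertices with no cycle, one vertex (root) of outdegree $0$ and all others of outdegree $1$. The tree graph $\mathcal TG$: vertices are spanning trees; for a tree $\mathbf a$ rooted at $r$ and $e$ with $s(e)=r$, adding $e$ and deleting the edge of $\mathbf a$ going out of $t(e)$ gives a tree $\mathbf b$ and an edge $\mathbf a\to\mathbf b$ of weight $x_e$. $\mathcal L$ is the matrix indexed by spanning trees with $\mathcal L_{\mathbf a\mathbf b}=x_e$ for such edges, $0$ for other off-diagonal entries, and $\mathcal L_{\mathbf a\mathbf a}=-\sum_{s(e)=r}x_e+y_r$, $r$ the root of $\mathbf a$. *)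

(* Defs.v *)
From HB Require Import structures.
From mathcomp Require Import all_boot all_order all_algebra.
Set Implicit Arguments. Unset Strict Implicit. Unset Printing Implicit Defensive.
Import Order.TTheory GRing.Theory Num.Theory.
Local Open Scope ring_scope.

Fixpoint mpoly (n : nat) : comNzRingType :=
  match n with
  | 0 => int
  | m.+1 => {poly mpoly m}
  end.

(* The indeterminate X_i of mpoly n (meaningful for i < n). *)
Fixpoint mvar (n : nat) (i : nat) : mpoly n :=
  match n return mpoly n with
  | 0 => 0
  | m.+1 => if i == m then ('X : {poly mpoly m}) else ((mvar m i)%:P : {poly mpoly m})
  end.

Section Graph.
Variables (V : finType) (adj : rel V).

Definition edge := {p : V * V | adj p.1 p.2}.
Definition src (e : edge) : V := (val e).1.
Definition tgt (e : edge) : V := (val e).2.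

Definition simple_digraph : Prop := irreflexive adj.
Definition strongly_connected : Prop := forall v w : V, connect adj v w.

Definition var := (edge + V)%type.
Definition PolyR := mpoly #|{: var}|.
Definition X (i : var) : PolyR := mvar #|{: var}| (enum_rank i).
Definition x (e : edge) : PolyR := X (inl e).
Definition y (v : V) : PolyR := X (inr v).

(* L = Q + diag(y). *)
Definition Lentry (v w : V) : PolyR :=
  if v == w then - (\sum_(e : edge | src e == v) x e) + y v
  else match insub (v, w) : option edge with Some e => x e | None => 0 end.
Definition Lmat : 'M[PolyR]_#|V| :=
  \matrix_(i, j) Lentry (enum_val i) (enum_val j).

(* A subgraph in which every vertex has outdegree <= 1 is encoded by a
   function f : V -> option V ; f v = Some w means the edge v -> w is in it,
   f v = None means v has outdegree 0. *)
Definition is_sptree (f : {ffun V -> option V}) : bool :=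
  [&& [forall v, forall w, (f v == Some w) ==> adj v w],
      #|[pred v | f v == None]| == 1%N
      (* no cycle: no edge v -> w of the subgraph with a path w ~> v in it *)
    & [forall v, forall w, (f v == Some w) ==>
          ~~ connect (fun a b => f a == Some b) w v]].

Definition sptree := {f : {ffun V -> option V} | is_sptree f}.

(* The tree obtained from a (root r) by adding e (s(e) = r) and deleting the
   edge of a going out of t(e). *)
Definition move (a : {ffun V -> option V}) (e : edge) : {ffun V -> option V} :=
  [ffun v => if v == src e then Some (tgt e)
             else if v == tgt e then None else a v].

Definition TLentry (a b : sptree) : PolyR :=
  match [pick r | val a r == None] with
  | None => 0
  | Some r =>
      if a == b then - (\sum_(e : edge | src e == r) x e) + y r
      else match [pick e : edge | (src e == r) && (move (val a) e == val b)] with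
           | Some e => x e
           | None => 0
           end
  end.

Definition TLmat : 'M[PolyR]_#|{: sptree}| :=
  \matrix_(i, j) TLentry (enum_val i) (enum_val j).

End Graph.

(* Main.v *)
Require Import Defs.
From HB Require Import structures.
From mathcomp Require Import all_boot all_order all_algebra perm fingroup.
Set Implicit Arguments. Unset Strict Implicit. Unset Printing Implicit Defensive.
Import Order.TTheory GRing.Theory Num.Theory.
Local Open Scope ring_scope.
Lemma det_reindex_same (R : comNzRingType) (T : finType) N (A : T -> T -> R)
  (h1 h2 : 'I_N -> T) : bijective h1 -> injective h2 ->
  \det (\matrix_(i,j) A (h1 i) (h1 j)) = \det (\matrix_(i,j) A (h2 i) (h2 j)).
Proof.
case=> h1i K1 K2 inj2.
have injs : injective (h1i \o h2).
  by move=> i j /= /(congr1 h1); rewrite !K2 => /inj2.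
set s := perm injs.
have -> : \matrix_(i,j) A (h2 i) (h2 j) =
          row_perm s (col_perm s (\matrix_(i,j) A (h1 i) (h1 j))).
  by apply/matrixP => i j; rewrite !mxE !permE /= !K2.
rewrite row_permE col_permE !det_mulmx !det_perm odd_permV.
by rewrite mulrCA -signr_addb addbb mulr1.
Qed.

Lemma det_reindex (R : comNzRingType) (T : finType) N1 N2 (A : T -> T -> R)
  (h1 : 'I_N1 -> T) (h2 : 'I_N2 -> T) : bijective h1 -> bijective h2 ->
  \det (\matrix_(i,j) A (h1 i) (h1 j)) = \det (\matrix_(i,j) A (h2 i) (h2 j)).
Proof.
move=> b1 b2.
have e : N1 = N2.
  by rewrite -[N1]card_ord -[N2]card_ord (bij_eq_card b1) (bij_eq_card b2).
subst N2; apply: det_reindex_same => //; exact: bij_inj.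
Qed.

Lemma div_det (R : comNzRingType) (T U : finType) (A : T -> T -> R)
  (B : U -> U -> R) (rootf : T -> U) (g : U -> T) N N'
  (hT : 'I_N -> T) (hU : 'I_N' -> U) :
  bijective hT -> bijective hU ->
  cancel g rootf ->
  (forall a v, \sum_b A a b * (rootf b == v)%:R = B (rootf a) v) ->
  exists q, \det (\matrix_(i,j) A (hT i) (hT j)) =
            \det (\matrix_(i,j) B (hU i) (hU j)) * q.
Proof.
move=> bT bU gK key.
have injU := bij_inj bU.
have injg : injective g := can_inj gK.
pose D := [set t | t \in codom (g \o hU)].
pose C := ~: D.
pose k := #|C|.
pose s (u : 'I_N' + 'I_k) : T :=
  match u with inl j => g (hU j) | inr i => @enum_val _ (mem C) i end.
pose h (q : 'I_(N' + k)) : T := s (split q).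
have cardD : #|D| = N'.
  rewrite -[N' in RHS]card_ord -(card_codom (f := g \o hU)); last first.
    by move=> i j /= /injg /injU.
  by apply: eq_card => t; rewrite inE.
have injs : injective s.
  case=> [i|i] [j|j] /=.
  - by move/injg/injU => ->.
  - move=> e; have := @enum_valP _ (mem C) j; rewrite -e inE inE.
    by rewrite (codom_f (g \o hU) i).
  - move=> e; have := @enum_valP _ (mem C) i; rewrite e inE inE.
    by rewrite (codom_f (g \o hU) j).
  - by move/enum_val_inj => ->.
have bh : bijective h.
  apply: inj_card_bij.
    by move=> p q /injs /(can_inj (@splitK _ _)).
  by rewrite card_ord -cardD cardsC.
rewrite (det_reindex A bT bh).
pose M := \matrix_(i,j) A (h i) (h j) : 'M[R]_(N' + k).
pose P2 := \matrix_(i, j) (rootf (@enum_val _ (mem C) i) == hU j)%:R : 'M[R]_(k, N').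
pose Lm := \matrix_(i,j) B (hU i) (hU j).
have colE : forall q j, (col_mx 1%:M P2) q j = (rootf (h q) == hU j)%:R.
  move=> q j; rewrite -[q]splitK /h unsplitK.
  case: (split q) => [i|i] /=.
    by rewrite col_mxEu !mxE gK (inj_eq injU).
  by rewrite col_mxEd !mxE.
have KEY : M *m col_mx 1%:M P2 = col_mx 1%:M P2 *m Lm.
  apply/matrixP => p j; rewrite !mxE.
  under eq_bigr => q _ do rewrite colE mxE.
  have -> : \sum_q A (h p) (h q) * (rootf (h q) == hU j)%:R =
            \sum_b A (h p) b * (rootf b == hU j)%:R.
    by rewrite (reindex h) //; apply: onW_bij.
  rewrite key.
  under eq_bigr => l _ do rewrite colE !mxE.
  case: bU => hUi K1 K2.
  rewrite (bigD1 (hUi (rootf (h p)))) //= K2 eqxx mul1r big1 ?addr0 // => l.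
  move=> ne; have [e|_] := eqVneq (rootf (h p)) (hU l).
    by move: ne; rewrite e K1 eqxx.
  by rewrite mul0r.
exists (\det (drsubmx M - P2 *m ursubmx M)).
have [E1 E2] : ulsubmx M + ursubmx M *m P2 = Lm /\
               dlsubmx M + drsubmx M *m P2 = P2 *m Lm.
  move: KEY; rewrite -[M in M *m _]submxK mul_block_col mul_col_mx.
  by rewrite !mulmx1 mul1mx; apply: eq_col_mx.
have : M *m block_mx 1%:M 0 P2 1%:M =
       block_mx 1%:M 0 P2 1%:M *m block_mx Lm (ursubmx M) 0 (drsubmx M - P2 *m ursubmx M).
  rewrite -[M in M *m _]submxK !mulmx_block.
  rewrite !mulmx1 !mulmx0 !mul1mx !mul0mx !addr0 !add0r E1 E2.
  by rewrite addrC subrK.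
move/(congr1 determinant); rewrite !det_mulmx det_lblock det_ublock !det1 mul1r mulr1.
by rewrite mul1r.
Qed.
Section Trees.
Variables (V : finType) (adj : rel V).
Hypothesis sc : strongly_connected adj.

Section Root.
Variable v : V.
Definition stepR (S : {set V}) : {set V} := S :|: [set u | [exists w in S, adj u w]].
Definition RR k := iter k stepR [set v].

Lemma reach u : exists k, u \in RR k.
Proof.
have /connectP [p pp e] := sc u v.
elim: p u pp e => [|z p IH] u /=; first by move=> _ ev; exists 0%N; rewrite /RR /= inE ev.
case/andP => auz pz /(IH _ pz) [k zk]; exists k.+1.
rewrite /RR /= /stepR !inE; apply/orP; right; apply/existsP; exists z.
by rewrite zk.
Qed.

Definition dd u := ex_minn (reach u).

Lemma dd_in u : u \in RR (dd u).
Proof. by rewrite /dd; case: ex_minnP. Qed.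

Lemma dd_min u k : u \in RR k -> (dd u <= k)%N.
Proof. by rewrite /dd; case: ex_minnP => m _ H /H. Qed.

Lemma dd0 u : (dd u == 0%N) = (u == v).
Proof.
apply/idP/idP => [/eqP e | /eqP ->].
  by have := dd_in u; rewrite e /RR /= inE.
by rewrite -leqn0 dd_min // /RR /= inE.
Qed.

Lemma dd_step u : u != v -> exists w, adj u w && (dd w < dd u)%N.
Proof.
rewrite -dd0 => nz.
have := dd_in u; case e: (dd u) nz => [|k] // _.
rewrite /RR /= /stepR inE => /orP [uk | ].
  by have := dd_min uk; rewrite e ltnn.
rewrite inE => /existsP [w /andP [wk auw]]; exists w.
by rewrite auw ltnS dd_min.
Qed.

Definition tf : {ffun V -> option V} :=
  [ffun u => if u == v then None else [pick w | adj u w && (dd w < dd u)%N]].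

Lemma tf_dec a b : tf a == Some b -> (dd b < dd a)%N.
Proof.
rewrite ffunE; case: ifP => // _.
case: pickP => // z /andP [_ h] /eqP [<-].
exact: h.
Qed.

Lemma tfNone u : (tf u == None) = (u == v).
Proof.
rewrite ffunE; case: ifP => //= /negbT nv.
case: pickP => // H.
by have [w hw] := dd_step nv; have := H w; rewrite hw.
Qed.

Lemma tf_tree : is_sptree adj tf.
Proof.
apply/and3P; split.
- apply/forallP => a; apply/forallP => b; apply/implyP.
  rewrite ffunE; case: ifP => // _.
  case: pickP => // z /andP [h _] /eqP [<-].
  exact: h.
- apply/eqP/eq_card1 => u; rewrite inE /=; exact: tfNone.
- apply/forallP => a; apply/forallP => b; apply/implyP => ab.
  apply/negP => /connectP [p pp e].
  have : (dd a <= dd b)%N.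
    rewrite e; move: pp; clear; elim: p b => [|z p IH] c //= /andP [cz /IH].
    by move/leq_trans; apply; apply: ltnW; apply: tf_dec.
  by rewrite leqNgt tf_dec.
Qed.

End Root.

Lemma path_succ (T : eqType) (e : rel T) x p z : path e x p -> z \in x :: p ->
  z = last x p \/ exists2 z', z' \in x :: p & e z z'.
Proof.
elim: p x => [|y p IH] x /=; first by rewrite inE => _ /eqP ->; left.
case/andP => exy pyp; rewrite inE => /orP [/eqP -> | zin].
  by right; exists y; rewrite // !inE eqxx orbT.
case: (IH _ pyp zin) => [-> | [z' z'in ezz']]; first by left.
by right; exists z' => //; rewrite inE z'in orbT.
Qed.

Hypothesis simple : simple_digraph adj.

Lemma src_tgt (e : edge adj) : src e != tgt e.
Proof. by apply/eqP => h; have := valP e; rewrite -/(src e) -/(tgt e) h simple. Qed.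

Lemma root_uniq (a : sptree adj) z z' : val a z = None -> val a z' = None -> z = z'.
Proof.
move=> hz hz'; have /and3P [_ c _] := valP a.
case/card1P: c => r hr.
have := hr z; have := hr z'; rewrite !inE /= hz hz' eqxx.
by move=> /esym/eqP -> /esym/eqP ->.
Qed.

Lemma pick_root (a : sptree adj) z : val a z = None -> [pick r | val a r == None] = Some z.
Proof.
move=> hz; case: pickP => [r /eqP hr | H]; first by rewrite (root_uniq hr hz).
by have := H z; rewrite hz eqxx.
Qed.

Definition rootf (v0 : V) (a : sptree adj) : V := odflt v0 [pick r | val a r == None].

Lemma rootfE v0 (a : sptree adj) z : val a z = None -> rootf v0 a = z.
Proof. by move=> hz; rewrite /rootf (pick_root hz). Qed.

Lemma move_tree (a : sptree adj) (e : edge adj) : val a (src e) = None ->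
  is_sptree adj (move (val a) e).
Proof.
move=> hr; have /and3P [sub c acyc] := valP a.
have rt := src_tgt e.
set f := val a in hr sub c acyc *; set g := move f e.
have gt : g (tgt e) = None by rewrite /g /move ffunE eq_sym (negbTE rt) eqxx.
apply/and3P; split.
- apply/forallP => u; apply/forallP => w; apply/implyP.
  rewrite /g /move ffunE; case: ifP => [/eqP -> /eqP [<-] | _].
    exact: (valP e).
  case: ifP => // _ h.
  by move/forallP: sub => /(_ u) /forallP /(_ w) /implyP; apply.
- apply/eqP/(eq_card1 (x := tgt e)) => u; rewrite inE /=.
  rewrite /g /move ffunE; case: (u =P src e) => [-> | nr].
    by rewrite inE (negbTE rt).
  case: (u =P tgt e) => [-> | nt]; first by rewrite !inE !eqxx.
  rewrite inE; move/eqP/negbTE: nt => ->.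
  apply/negbTE/eqP => /eqP /eqP h; apply: nr; exact: (root_uniq h hr).
- apply/forallP => u; apply/forallP => w; apply/implyP => guw.
  apply/negP => /connectP [p pp ew].
  have clos : forall z, z \in w :: p -> exists2 z', z' \in w :: p & g z == Some z'.
    move=> z zin; case: (path_succ pp zin) => [ze | //].
    by exists w; rewrite ?inE ?eqxx // ze -ew.
  have noT : forall z, z \in w :: p -> z != tgt e.
    move=> z /clos [z' _]; apply: contraTneq => ->; by rewrite gt.
  have noR : forall z, z \in w :: p -> z != src e.
    move=> z /clos [z' /noT z't]; apply: contraTneq => ->.
    by rewrite /g /move ffunE eqxx; apply: contra z't => /eqP [->].
  have eqfg : forall z, z \in w :: p -> g z = f z.
    by move=> z zin; rewrite /g /move ffunE (negbTE (noR _ zin)) (negbTE (noT _ zin)).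
  have pf : path (fun a b => f a == Some b) w p.
    rewrite -(@eq_in_path _ (mem (w :: p)) (fun a b => g a == Some b)) //.
      by move=> z z' zin _; rewrite /= eqfg.
    by apply/allP.
  have fuw : f u == Some w by rewrite -eqfg // ew mem_last.
  move/forallP: acyc => /(_ u) /forallP /(_ w) /implyP /(_ fuw) /negP; apply.
  by apply/connectP; exists p.
Qed.

Lemma edge_eq (e e' : edge adj) : src e = src e' -> tgt e = tgt e' -> e = e'.
Proof.
case: e => [[a b] ?]; case: e' => [[c d] ?]; rewrite /src /tgt /= => h1 h2.
by apply: val_inj => /=; rewrite h1 h2.
Qed.

Variable v0 : V.

Lemma key (a : sptree adj) v :
  \sum_b TLentry a b * (rootf v0 b == v)%:R = Lentry adj (rootf v0 a) v.
Proof.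
have [r hr] : exists r, val a r = None.
  have /and3P [_ c _] := valP a; case/card1P: c => r hr.
  by exists r; have := hr r; rewrite !inE eqxx => /eqP.
rewrite (rootfE v0 hr) /TLentry (pick_root hr) (bigD1 a) //= eqxx.
set D := - _ + _.
have step : forall b : sptree adj, b != a ->
   (if a == b then D else
     match [pick e | (src e == r) && (move (val a) e == val b)] with
     | Some e => x e | None => 0 end) * (rootf v0 b == v)%:R =
   \sum_e (if (src e == r) && (move (val a) e == val b)
           then x e * (tgt e == v)%:R else 0).
  move=> b ba; rewrite eq_sym (negbTE ba).
  case: pickP => [e /andP [se me] | H]; last first.
    by rewrite mul0r big1 // => e; rewrite H.
  rewrite (bigD1 e) //= se me /= big1 ?addr0; last first.
    move=> e' ne'; case: ifP => // /andP [se' me']; exfalso; move/negP: ne'; apply.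
    apply/eqP/edge_eq; first by rewrite (eqP se); apply/eqP.
    have := congr1 (fun f : {ffun V -> option V} => f r) (etrans (eqP me') (esym (eqP me))).
    have E1 : move (val a) e' r = Some (tgt e') by rewrite /move ffunE (eqP se') eqxx.
    have E2 : move (val a) e r = Some (tgt e) by rewrite /move ffunE (eqP se) eqxx.
    by rewrite E1 E2 => -[].
  congr (_ * _); congr ((_ == _)%:R).
  apply: rootfE; rewrite -(eqP me) /move ffunE eq_sym (negbTE (src_tgt e)) eqxx //.
rewrite (rootfE v0 hr) (eq_bigr _ step) exchange_big /=.
have step2 : forall e : edge adj,
  \sum_(b | b != a) (if (src e == r) && (move (val a) e == val b)
           then x e * (tgt e == v)%:R else 0) =
  if src e == r then x e * (tgt e == v)%:R else 0.
  move=> e; case: (boolP (src e == r)) => [se | _] /=; last by rewrite big1.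
  have hr' : val a (src e) = None by rewrite (eqP se).
  pose b0 : sptree adj := exist _ (move (val a) e) (move_tree hr').
  rewrite (bigD1 b0) /=; last first.
    apply/eqP => /(congr1 (fun b : sptree adj => val b r)) /=.
    by rewrite hr /move ffunE -(eqP se) eqxx.
  rewrite eqxx big1 ?addr0 // => b /andP [_ nb].
  case: eqP => // h; exfalso; move/negP: nb; apply; apply/eqP/val_inj.
  by rewrite /= h.
rewrite (eq_bigr _ (fun e _ => step2 e)) /Lentry.
case: (r =P v) => [<- | nrv].
  rewrite mulr1 big1 ?addr0 // => e _.
  case: ifP => // /eqP se; rewrite -se eq_sym (negbTE (src_tgt e)) mulr0 //.
rewrite mulr0 add0r.
case: insubP => [e0 _ ve0 | nadj].
  have se0 : src e0 = r := congr1 fst ve0.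
  have te0 : tgt e0 = v := congr1 snd ve0.
  rewrite (bigD1 e0) //= se0 te0 !eqxx mulr1 big1 ?addr0 // => e ne.
  case: ifP => // /eqP se; case: (tgt e =P v) => [te | _]; last by rewrite mulr0.
  by exfalso; move/negP: ne; apply; apply/eqP/edge_eq; rewrite ?se0 ?te0.
rewrite big1 // => e _.
case: ifP => // /eqP se; case: (tgt e =P v) => [te | _]; last by rewrite mulr0.
by exfalso; move/negP: nadj; apply; have := valP e; rewrite /= -/(src e) -/(tgt e) se te.
Qed.

End Trees.

Theorem lemma4p2 (V : finType) (adj : rel V) :
  simple_digraph adj -> strongly_connected adj ->
  exists q : PolyR adj, \det (TLmat adj) = \det (Lmat adj) * q.
Proof.
move=> simple sc.
case: (pickP (fun _ : V => true)) => [v0 _ | H]; last first.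
  exists (\det (TLmat adj)).
  suff -> : \det (Lmat adj) = 1 by rewrite mul1r.
  rewrite det_trig; last first.
    by apply/forallP => i; have := H (enum_val i).
  by rewrite big1 // => i; have := H (enum_val i).
rewrite /TLmat /Lmat.
have := (@div_det _ _ _ (@TLentry V adj) (Lentry adj) (rootf v0) (fun v => exist (fun f => is_sptree adj f) (tf sc v) (tf_tree sc v)) _ _ enum_val enum_val).
move/(_ _ _ (enum_val_bij _) (enum_val_bij _)); apply.
- by move=> v; apply: rootfE => /=; apply/eqP; rewrite tfNone eqxx.
- move=> a v; exact: key.
Qed.
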